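(* For every $n\ge 1$, $M^{\Box}_n = K^{\Box}_n = P^{\Box}_n$; in fact, a water/land coloring of the $1\times n$ fundamental domain satisfies (N1) and (N2$\Box$) on the Möbius strip iff it does so on the Klein bottle iff it does so on the projective plane.
   Context: Colorings. Each square is colored water or land. Two distinct squares are adjacent if they share an edge after all edge identifications; a set of squares is connected if its induced adjacency graph is connected (empty set counts as connected). (N1): the water is connected. For an interior (non-boundary) vertex $v$, its square-degree is the number of distinct squares having $v$ as a corner. (N2$\Box$): no interior vertex of square-degree $4$ has all incident squares water. Tile $[0,n]\times[0,1]$ by unit squares $[j-1,j]\times[0,1]$, called square $j$. The $1\times n$ Möbius strip identifies $(x,1)\sim(n-x,0)$ for $x\in[0,n]$; its boundary is the image of the vertical sides. The $1\times n$ Klein bottle additionally identifies $(0,y)\sim(n,y)$; the $1\times n$ projective plane additionally identifies $(0,y)\sim(n,1-y)$. $M^\Box_n$, $K^\Box_n$, $P^\Box_n$ are the numbers of colorings satisfying (N1) and (N2$\Box$) on the Möbius strip, Klein bottle, projective plane respectively. *)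

(* Defs.v *)
From mathcomp Require Import all_boot.
Set Implicit Arguments. Unset Strict Implicit. Unset Printing Implicit Defensive.

Inductive surf := Mob | Klein | Proj.

Section Surface.
Variable n : nat.

(* Squares: square j (1 <= j <= n) = [j-1,j] x [0,1] is indexed by i : 'I_n
   with i = j - 1.  A coloring assigns true = water, false = land. *)
Definition coloring := {ffun 'I_n -> bool}.

(* Grid points (k, y) with k in {0..n}, y in {0,1} (false = 0, true = 1). *)
Definition gpt := ('I_n.+1 * bool)%type.

(* Primitive identifications of grid points:
   Mobius:      (x,1) ~ (n-x,0);
   Klein:       additionally (0,y) ~ (n,y);
   projective:  additionally (0,y) ~ (n,1-y). *)
Definition glue_pt (S : surf) (p q : gpt) : bool :=
  [&& p.2, ~~ q.2 & (p.1 + q.1 == n)%N]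
  || match S with
     | Mob => false
     | Klein => [&& (p.1 == 0 :> nat), (q.1 == n :> nat) & (p.2 == q.2)]
     | Proj => [&& (p.1 == 0 :> nat), (q.1 == n :> nat) & (p.2 != q.2)]
     end.

Definition same_vertex (S : surf) (p q : gpt) : bool :=
  connect (fun a b => glue_pt S a b || glue_pt S b a) p q.

(* Grid edges: inl (i, y) = horizontal segment [i,i+1] x {y} (i < n);
   inr k = vertical segment {k} x [0,1] (k <= n). *)
Definition gedge := (('I_n * bool) + 'I_n.+1)%type.

(* Primitive identifications of edges:
   Mobius: top segment [i,i+1]x{1} ~ bottom segment [n-i-1,n-i]x{0};
   Klein / projective: additionally vertical side x=0 ~ vertical side x=n. *)
Definition glue_edge (S : surf) (e f : gedge) : bool :=
  match e, f with
  | inl (i, true), inl (j, false) => (i + j + 1 == n)%N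
  | inr k, inr l =>
      match S with
      | Mob => false
      | _ => (k == 0 :> nat) && (l == n :> nat)
      end
  | _, _ => false
  end.

Definition same_edge (S : surf) (e f : gedge) : bool :=
  connect (fun a b => glue_edge S a b || glue_edge S b a) e f.

Definition sq_edge (i : 'I_n) (e : gedge) : bool :=
  match e with
  | inl (j, _) => j == i
  | inr k => (k == i :> nat) || (k == i.+1 :> nat)
  end.

Definition sq_corner (i : 'I_n) (p : gpt) : bool :=
  (p.1 == i :> nat) || (p.1 == i.+1 :> nat).

Definition adj (S : surf) (a b : 'I_n) : bool :=
  (a != b) &&
  [exists e, exists f, [&& sq_edge a e, sq_edge b f & same_edge S e f]].

Definition bdry_pt (S : surf) (p : gpt) : bool :=
  match S with
  | Mob => (p.1 == 0 :> nat) || (p.1 == n :> nat)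
  | _ => false
  end.

Definition interior (S : surf) (p : gpt) : bool :=
  ~~ [exists q, same_vertex S p q && bdry_pt S q].

Definition incident (S : surf) (p : gpt) (i : 'I_n) : bool :=
  [exists q, sq_corner i q && same_vertex S p q].

Definition sq_degree (S : surf) (p : gpt) : nat :=
  #|[set i | incident S p i]|.

Definition N1 (S : surf) (c : coloring) : bool :=
  [forall a, forall b, (c a && c b) ==>
     connect (fun x y => [&& c x, c y & adj S x y]) a b].

Definition N2box (S : surf) (c : coloring) : bool :=
  [forall p, (interior S p && (sq_degree S p == 4%N)) ==>
     ~~ [forall i, incident S p i ==> c i]].

Definition good (S : surf) (c : coloring) : bool := N1 S c && N2box S c.

Definition count_good (S : surf) : nat := #|[set c : coloring | good S c]|.

End Surface.

Definition Mbox (n : nat) := count_good n Mob.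
Definition Kbox (n : nat) := count_good n Klein.
Definition Pbox (n : nat) := count_good n Proj.

(* Main.v *)
Require Import Defs.
From mathcomp Require Import all_boot zify.
Set Implicit Arguments. Unset Strict Implicit.

Lemma conn_closed (T : finType) (e : rel T) (P : pred T) x y :
  P x -> (forall u v, P u -> e u v -> P v) -> connect e x y -> P y.
Proof.
move=> Px H /connectP [p pth ->]; elim: p x Px pth => //= z p IH x Px /andP[exz pth].
exact: IH (H _ _ Px exz) pth.
Qed.

Lemma conn_mono (T:finType) (e e' : rel T) : (forall x y, e x y -> e' x y) ->
  forall x y, connect e x y -> connect e' x y.
Proof. by move=> H x y; apply: connect_sub => u v /H; apply: connect1. Qed.

Ltac brute := intros; lia.

Lemma bd_closed n S (u v : gpt n) : (u.1 == 0 :> nat) || (u.1 == n :> nat) ->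
  glue_pt S u v || glue_pt S v u -> (v.1 == 0 :>nat) || (v.1 == n :> nat).
Proof.
case: u v => [[u1 hu] u2] [[v1 hv] v2]; rewrite /glue_pt; case: S; case: u2; case: v2 => /=; brute.
Qed.

Definition Pint n (k : nat) (b : bool) (q : gpt n) : bool :=
  (q.1 == k :>nat) && (q.2 == b) || (q.1 == n-k :>nat) && (q.2 == ~~b).

Lemma int_closed n S k b (u v : gpt n) : 0 < k < n -> Pint k b u ->
  glue_pt S u v || glue_pt S v u -> Pint k b v.
Proof.
case: u v => [[u1 hu] u2] [[v1 hv] v2]; rewrite /Pint /glue_pt => /andP[k0 kn].
case: S; case: u2; case: v2; case: b => /=; brute.
Qed.

Lemma same_vertex_int n S (p q : gpt n) : 0 < p.1 < n ->
  same_vertex S p q = Pint p.1 p.2 q.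
Proof.
move=> hp; apply/idP/idP.
  move=> H; apply: (conn_closed (P := Pint p.1 p.2) _ _ H).
    by rewrite /Pint !eqxx.
  by move=> u v Pu; apply: int_closed.
case: p q hp => [[p1 hp1] p2] [[q1 hq1] q2] /= hp; rewrite /Pint /= => H.
case/orP: H => /andP[/eqP e1 /eqP e2].
  have -> : Ordinal hq1 = Ordinal hp1 by apply: val_inj.
  by rewrite e2; apply: connect0.
apply: connect1; rewrite /glue_pt /= e2.
case: p2 e2 => _ /=; apply/orP.
  by left; rewrite /= e1; apply/orP; left; apply/eqP; lia.
by right; rewrite /= e1; apply/orP; left; apply/eqP; lia.
Qed.

Lemma ordE N a b (ha : a < N) (hb : b < N) : (Ordinal ha == Ordinal hb) = (a == b).
Proof. by []. Qed.

Lemma inlE (A B : eqType) (x y : A) : (inl x == inl y :> A + B) = (x == y).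
Proof. by []. Qed.
Lemma inrE (A B : eqType) (x y : B) : (inr x == inr y :> A + B) = (x == y).
Proof. by []. Qed.
Lemma inlrE (A B : eqType) (x : A) (y : B) : (inl x == inr y :> A + B) = false.
Proof. by []. Qed.
Lemma inrlE (A B : eqType) (x : A) (y : B) : (inr y == inl x :> A + B) = false.
Proof. by []. Qed.

Definition ER n S (e f : gedge n) := (e == f) || glue_edge S e f || glue_edge S f e.

Lemma edge_closed n S (e u v : gedge n) : 0 < n -> ER S e u ->
  glue_edge S u v || glue_edge S v u -> ER S e v.
Proof.
rewrite /ER => n0.
case: e => [[[i hi] b]|[k hk]]; case: u => [[[j hj] c]|[l hl]]; case: v => [[[m hm] d]|[p hp]];
 case: S => /=; try case: b; try case: c; try case: d => /=.
all: rewrite ?inlE ?inrE ?inlrE ?inrlE ?xpair_eqE ?ordE; brute.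
Qed.

Lemma same_edge_ER n S (e f : gedge n) : 0 < n -> same_edge S e f -> ER S e f.
Proof.
move=> n0 H; apply: (conn_closed (P := ER S e) _ _ H).
  by rewrite /ER eqxx.
by move=> u v Pu; apply: edge_closed.
Qed.

Lemma ER_same n S (e f : gedge n) : ER S e f -> same_edge S e f.
Proof.
rewrite /ER /same_edge => /orP[/orP[/eqP->|H]|H]; first exact: connect0.
  by apply: connect1; rewrite H.
by apply: connect1; rewrite H orbT.
Qed.

Lemma ER_mob n S (e f : gedge n) : ER Mob e f -> ER S e f.
Proof.
rewrite /ER.
case: e => [[[i hi] b]|[k hk]]; case: f => [[[j hj] c]|[l hl]];
 case: S => /=; try case: b; try case: c => /=;
 rewrite ?inlE ?inrE ?inlrE ?inrlE ?xpair_eqE ?ordE; brute.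
Qed.

Lemma ER_S n S (e f : gedge n) (a b : 'I_n) : 0 < n -> ER S e f -> sq_edge a e -> sq_edge b f ->
  ER Mob e f || ((a == 0 :>nat) && (b == n.-1 :>nat)) || ((b == 0 :>nat) && (a == n.-1 :>nat)).
Proof.
rewrite /ER; case: a b => [a ha] [b hb] n0.
case: e => [[[i hi] c]|[k hk]]; case: f => [[[j hj] d]|[l hl]];
 case: S => /=; try case: c; try case: d => /=;
 rewrite ?inlE ?inrE ?inlrE ?inrlE ?xpair_eqE ?ordE; brute.
Qed.

Lemma adj_eq n S (a b : 'I_n) : 0 < n -> adj S a b = adj Mob a b.
Proof.
move=> n0; rewrite /adj; apply/andP/andP => -[ab /existsP[e /existsP[f /and3P[ea fb ef]]]];
  split=> //.
  have := ER_S n0 (same_edge_ER n0 ef) ea fb.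
  case/orP=> [/orP[H|/andP[a0 b1]]|/andP[b0 a1]].
  - by apply/existsP; exists e; apply/existsP; exists f; rewrite ea fb ER_same.
  - apply/existsP; exists (inl (a, true)); apply/existsP; exists (inl (b, false)).
    rewrite /= !eqxx /=; apply: ER_same; rewrite /ER /=; apply/orP; left; apply/orP; right.
    brute.
  - apply/existsP; exists (inl (a, false)); apply/existsP; exists (inl (b, true)).
    rewrite /= !eqxx /=; apply: ER_same; rewrite /ER /=; apply/orP; right.
    brute.
apply/existsP; exists e; apply/existsP; exists f; rewrite ea fb /=.
by apply: ER_same; apply: ER_mob; apply: same_edge_ER.
Qed.

Lemma int_interior n S (p : gpt n) : 0 < p.1 < n -> interior S p.
Proof.
move=> hp; rewrite /interior; apply/negP => /existsP[q /andP[sv bd]].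
rewrite same_vertex_int // in sv; move: sv bd hp; rewrite /Pint /bdry_pt.
case: S; case: q => [[q1 hq] q2]; case: p => [[p1 hp1] p2] /=; brute.
Qed.

Lemma deg_bd n S (p : gpt n) : (p.1 == 0 :>nat) || (p.1 == n:>nat) -> sq_degree S p <= 2.
Proof.
case: n p => [|m] p hp.
  by rewrite /sq_degree; apply: leq_trans (max_card _) _; rewrite card_ord.
rewrite /sq_degree; apply: (@leq_trans #|[set (@ord0 m); ord_max]|); last by rewrite cards2; case: (_ != _).
apply: subset_leq_card.
apply/subsetP => i; rewrite !inE => /existsP[q /andP[cq sv]].
have := conn_closed (P := fun q : gpt m.+1 => (q.1 == 0 :> nat) || (q.1 == m.+1 :> nat)) hp _ sv.
have H : forall u v : gpt m.+1, (u.1 == 0 :> nat) || (u.1 == m.+1 :> nat) ->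
   (glue_pt S u v || glue_pt S v u) -> (v.1 == 0 :> nat) || (v.1 == m.+1 :> nat).
  by move=> u v; apply: bd_closed.
move/(_ H); move: cq; rewrite /sq_corner -!val_eqE /=.
case: i q {sv H hp} => [i hi] [[q1 hq] q2] /=; brute.
Qed.

Lemma N2_eq n S (c : coloring n) : 0 < n -> N2box S c = N2box Mob c.
Proof.
move=> n0; rewrite /N2box; apply: eq_forallb => p.
case hp: (0 < p.1 < n).
  have E : forall i, incident S p i = incident Mob p i.
    by move=> i; rewrite /incident; apply: eq_existsb => q; rewrite !same_vertex_int.
  have Es : [set i | incident S p i] = [set i | incident Mob p i].
    by apply/setP=> i; rewrite !inE E.
  have Ef : [forall i, incident S p i ==> c i] = [forall i, incident Mob p i ==> c i].
    by apply: eq_forallb => i; rewrite E.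
  by rewrite /sq_degree Es Ef !int_interior.
have {}hp : (p.1 == 0 :>nat) || (p.1 == n :>nat).
  by move: hp; case: p => [[k hk] b] /=; lia.
have D : forall S', (sq_degree S' p == 4) = false.
  by move=> S'; apply/negbTE; have := deg_bd S' hp; lia.
by rewrite !D !andbF.
Qed.
Lemma N1_eq n S (c : coloring n) : 0 < n -> N1 S c = N1 Mob c.
Proof.
move=> n0; rewrite /N1.
have E : (fun x y => [&& c x, c y & adj S x y]) =2 (fun x y => [&& c x, c y & adj Mob x y]).
  by move=> x y; rewrite (adj_eq S x y n0).
apply: eq_forallb => a; apply: eq_forallb => b.
by rewrite (eq_connect E a b).
Qed.

Lemma good_eq n S (c : coloring n) : 0 < n -> good S c = good Mob c.
Proof. by move=> n0; rewrite /good (N2_eq S c n0) (N1_eq S c n0). Qed.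

Theorem lemma4p1 (n : nat) : (0 < n)%N ->
  Mbox n = Kbox n /\ Kbox n = Pbox n /\
  (forall c : coloring n,
     (good Mob c = good Klein c) /\ (good Klein c = good Proj c)).
Proof.
move=> n0.
have G : forall S, count_good n S = count_good n Mob.
  move=> S; rewrite /count_good.
  have -> : [set c : coloring n | good S c] = [set c : coloring n | good Mob c].
    by apply/setP => c; rewrite !inE (good_eq S c n0).
  by [].
rewrite /Mbox /Kbox /Pbox (G Klein) (G Proj); split=> //; split=> // c.
by rewrite (good_eq Klein c n0) (good_eq Proj c n0).
Qed.
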